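(* Let $(Q(M))_{M\in\mathcal N}$ be a family of matrices satisfying (A1)–(A3), and let $p$ be a stochastic choice function such that $p(\cdot,\{i,j\})\bigl(I-Q(\{i,j\})\bigr)=0$ for all distinct $i,j\in X$. Then for a menu $M\in\mathcal N$ we have $p(\cdot,M)\bigl(I-Q(M)\bigr)=0$ if and only if for every $j\in M$ $$\sum_{\substack{i\in M\setminus\{j\}:\\ q_{ji}(M)>0}}\frac{\delta_{ji}(M)\,q_{ji}(M)}{p(i,\{i,j\})}\;-\sum_{\substack{i\in M\setminus\{j\}:\\ q_{ji}(M)=0,\ q_{ji}(\{i,j\})=0}}\frac{\delta_{ij}(M)\,q_{ij}(M)}{p(j,\{i,j\})}=0$$ (all denominators appearing here are strictly positive).
   Context: $X$ is a finite set of alternatives; a menu is a nonempty subset of $X$, and $\mathcal N$ denotes the set of all menus. A stochastic choice function is a map $p:X\times\mathcal N\to[0,1]$ with $\sum_{i\in M}p(i,M)=1$ and $p(i,M)=0$ for $i\notin M$; $p(\cdot,M)$ denotes the row vector $(p(i,M))_{i\in M}$. For $M\in\mathcal N$ and $i,j\in M$ let $\delta_{ij}(M)=p(i,M)\,p(j,\{i,j\})-p(i,\{i,j\})\,p(j,M)$. The family $Q(M)=(q_{ij}(M))_{i,j\in M}$, $M\in\mathcal N$, has nonnegative entries and satisfies for all $M\in\mathcal N$ and distinct $i,j\in M$: (A1) $q_{ii}(M)=1-\sum_{k\neq i}q_{ik}(M)>0$; (A2) if $q_{ij}(\{i,j\})=0$ then $q_{ji}(\{i,j\})>0$; (A3)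 $q_{ij}(\{i,j\})\,q_{ji}(M)=q_{ji}(\{i,j\})\,q_{ij}(M)$. *)

(* Defs.v *)
From mathcomp Require Import all_boot all_order all_algebra.
Set Implicit Arguments. Unset Strict Implicit. Unset Printing Implicit Defensive.
Import Order.TTheory GRing.Theory Num.Theory.
Local Open Scope ring_scope.

(* X is a finType; menus are nonempty {set X}; p i M = p(i,M);
   Q M i j = q_ij(M). *)

Definition is_scf (R : realFieldType) (X : finType) (p : X -> {set X} -> R) : Prop :=
  forall M : {set X}, M != set0 ->
    (forall i, 0 <= p i M <= 1) /\
    (\sum_(i in M) p i M = 1) /\
    (forall i, i \notin M -> p i M = 0).

Definition delta (R : realFieldType) (X : finType) (p : X -> {set X} -> R)
  (M : {set X}) (i j : X) : R :=
  p i M * p j [set i; j] - p i [set i; j] * p j M.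

(* p(.,M)(I - Q(M)) = 0, written entrywise: for every column k in M,
   sum_{l in M} p(l,M) ((I)_{lk} - q_lk(M)) = 0. *)
Definition stationary (R : realFieldType) (X : finType) (p : X -> {set X} -> R)
  (Q : {set X} -> X -> X -> R) (M : {set X}) : Prop :=
  forall k, k \in M ->
    \sum_(l in M) p l M * ((l == k)%:R - Q M l k) = 0.

(* Assumptions (A1)-(A3) plus nonnegativity *)
Definition Q_assumptions (R : realFieldType) (X : finType)
  (Q : {set X} -> X -> X -> R) : Prop :=
  (forall M : {set X}, M != set0 -> forall i j, i \in M -> j \in M -> 0 <= Q M i j) /\
  (forall M : {set X}, M != set0 -> forall i, i \in M ->
      Q M i i = 1 - \sum_(k in M | k != i) Q M i k /\ 0 < Q M i i) /\
  (forall i j : X, i != j -> Q [set i; j] i j = 0 -> 0 < Q [set i; j] j i) /\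
  (forall M : {set X}, M != set0 -> forall i j, i \in M -> j \in M -> i != j ->
      Q [set i; j] i j * Q M j i = Q [set i; j] j i * Q M i j).

(* Main.v *)
Require Import Defs.
From mathcomp Require Import all_boot all_order all_algebra.
From mathcomp Require Import ring.
Import Order.TTheory GRing.Theory Num.Theory.
Local Open Scope ring_scope.

Section H.
Variables (R : realFieldType) (X : finType)
  (Q : {set X} -> X -> X -> R) (p : X -> {set X} -> R).

Lemma col_eq (M : {set X}) k :
  k \in M -> Q M k k = 1 - \sum_(l in M | l != k) Q M k l ->
  \sum_(l in M) p l M * ((l == k)%:R - Q M l k) =
  \sum_(l in M | l != k) (p k M * Q M k l - p l M * Q M l k).
Proof.
move=> kM Qkk; rewrite (bigD1 k) //= eqxx Qkk subKr.
rewrite mulr_sumr sumrB.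
have -> : \sum_(i in M | i != k) p i M * ((i == k)%:R - Q M i k) =
   - \sum_(i in M | i != k) (p i M * Q M i k).
  rewrite -sumrN; apply: eq_bigr => l /andP[_ /negbTE h].
  by rewrite h sub0r mulrN.
by [].
Qed.

Lemma pair_sum (F : X -> R) i j : i != j ->
  \sum_(l in [set i; j]) F l = F i + F j.
Proof. move=> hij. by rewrite big_setU1 ?big_set1 // inE. Qed.

Lemma pair_sum1 (F : X -> R) i j : i != j ->
  \sum_(l in [set i; j] | l != j) F l = F i.
Proof.
move=> hij; rewrite (eq_bigl (fun l => l == i)) ?big_pred1_eq // => l.
rewrite !inE; case: (eqVneq l i) => [->|_] /=; first by rewrite hij.
by case: (l == j).
Qed.
End H.

Theorem lemmaA3 (R : realFieldType) (X : finType)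
  (Q : {set X} -> X -> X -> R) (p : X -> {set X} -> R) :
  Q_assumptions Q ->
  is_scf p ->
  (forall i j : X, i != j -> stationary p Q [set i; j]) ->
  forall M : {set X}, M != set0 ->
    (stationary p Q M <->
     forall j, j \in M ->
       \sum_(i in M | (i != j) && (0 < Q M j i))
          (delta p M j i * Q M j i / p i [set i; j])
       - \sum_(i in M | [&& i != j, Q M j i == 0 & Q [set i; j] j i == 0])
          (delta p M i j * Q M i j / p j [set i; j]) = 0).
Proof.
move=> [QA0 [QA1 [QA2 QA3]]] scf pst M M0.
have key : forall j, j \in M ->
   \sum_(i in M | (i != j) && (0 < Q M j i))
          (delta p M j i * Q M j i / p i [set i; j])
       - \sum_(i in M | [&& i != j, Q M j i == 0 & Q [set i; j] j i == 0])
          (delta p M i j * Q M i j / p j [set i; j]) =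
   \sum_(l in M | l != j) (p j M * Q M j l - p l M * Q M l j).
  move=> j jM.
  rewrite !big_mkcondr -sumrB; apply: eq_bigr => i iM.
  case: (eqVneq i j) => [->|hij] //=; first by rewrite subr0.
  set P := [set i; j].
  have P0 : P != set0 by apply/set0Pn; exists i; rewrite !inE eqxx.
  have iP : i \in P by rewrite !inE eqxx.
  have jP : j \in P by rewrite !inE eqxx orbT.
  have qji0 : 0 <= Q M j i by apply: QA0.
  have qij0 : 0 <= Q M i j by apply: QA0.
  have Pji0 : 0 <= Q P j i by apply: QA0.
  have Pij0 : 0 <= Q P i j by apply: QA0.
  have A2' : Q P j i = 0 -> 0 < Q P i j.
    by move=> h; rewrite /P setUC; apply: QA2; rewrite 1?eq_sym // /P setUC in h *.
  have A3' : Q P j i * Q M i j = Q P i j * Q M j i.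
    by rewrite /P setUC; apply: QA3; rewrite // eq_sym.
  have pair : p j P * Q P j i = p i P * Q P i j.
    have := pst i j hij j jP.
    rewrite col_eq //; last by have [->] := QA1 P P0 j jP.
    rewrite pair_sum1 //; move/eqP; rewrite subr_eq0 => /eqP ->.
    by [].
  have [scf1 [scf2 _]] := scf P P0.
  have sumP : p i P + p j P = 1 by rewrite -scf2 pair_sum.
  have piP0 : 0 <= p i P by have /andP[] := scf1 i.
  have pjP0 : 0 <= p j P by have /andP[] := scf1 j.
  rewrite /delta.
  have [qpos|qnpos] := ltrP 0 (Q M j i).
    rewrite (gt_eqF qpos) /= subr0 (_ : [set j; i] = P); last by rewrite /P setUC.
    have PjiP : Q P j i != 0.
      apply/eqP => h; move: A3'; rewrite h mul0r => /esym /eqP.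
      by rewrite mulf_eq0 (gt_eqF (A2' h)) (gt_eqF qpos).
    have piPn : p i P != 0.
      apply/eqP => h; move: pair; rewrite h mul0r => /eqP.
      rewrite mulf_eq0 (negbTE PjiP) orbF => /eqP h2.
      by move: sumP; rewrite h h2 addr0 => /eqP; rewrite eq_sym oner_eq0.
    have k : p j P * Q M j i = p i P * Q M i j.
      apply: (mulIf PjiP).
      transitivity ((p j P * Q P j i) * Q M j i); first by ring.
      rewrite pair.
      transitivity (p i P * (Q P i j * Q M j i)); first by ring.
      rewrite -A3'; ring.
    apply/eqP; rewrite -subr_eq0; apply/eqP.
    transitivity (p i M * (p i P * Q M i j - p j P * Q M j i) / p i P).
      by field.
    by rewrite k subrr mulr0 mul0r.
  have qz : Q M j i = 0 by apply/eqP; rewrite eq_le qnpos qji0.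
  rewrite qz eqxx /=.
  case: (eqVneq (Q P j i) 0) => [h|h] /=.
    have hi : p i P = 0.
      apply/eqP; move: pair; rewrite h mulr0 => /esym /eqP.
      by rewrite mulf_eq0 (gt_eqF (A2' h)) orbF.
    have hj : p j P = 1 by rewrite -sumP hi add0r.
    rewrite /P in hi hj *; rewrite hi hj invr1; ring.
  have : Q P j i * Q M i j = 0 by rewrite A3' qz mulr0.
  move/eqP; rewrite mulf_eq0 (negbTE h) /= => /eqP ->; ring.
split.
  move=> st j jM; rewrite key //.
  have := st j jM; rewrite col_eq //; last by have [->] := QA1 M M0 j jM.
move=> h k kM; rewrite col_eq //; last by have [->] := QA1 M M0 k kM.
by rewrite -key // h.
Qed.
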